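(* Let $M=P+\varepsilon D\in\mathbb{DH}[t]$ be monic with $\operatorname{mrpf}(P)=1$, and suppose $M$ admits a factorization $M=(t-h_1)\cdots(t-h_k)$ with $h_i\in\mathbb{DH}$. Write $P\overline{P}=\prod_{i=1}^m N_i^{n_i}$ with pairwise coprime irreducible monic $N_i\in\mathbb{R}[t]$. Then for every $x_0\in\mathbb{R}$ and every $x=x_1\mathbf{i}+x_2\mathbf{j}+x_3\mathbf{k}$ with $x_1,x_2,x_3\in\mathbb{R}$, setting $X=Px\overline{P}+x_0(P\overline{D}-D\overline{P})\in\mathbb{H}[t]$, for every $i$ with $n_i>1$ the polynomial $N_i^{n_i}$ divides the real polynomial $X\overline{X}$. (Geometrically: every intersection point of multiplicity $\mu>1$ of a trajectory $t\mapsto x_0P\overline{P}+\varepsilon X$ of the motion parametrized by $M$ with the plane at infinity lies on the absolute circle with multiplicity $\mu$.)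
   Context: $\mathbb{D}=\mathbb{R}[\varepsilon]/\langle\varepsilon^2\rangle$ denotes the dual numbers. $\mathbb{H}$ denotes the real quaternions with basis $1,\mathbf{i},\mathbf{j},\mathbf{k}$, $\mathbf{i}^2=\mathbf{j}^2=\mathbf{k}^2=\mathbf{i}\mathbf{j}\mathbf{k}=-1$. The dual quaternions $\mathbb{DH}$ are $\mathbb{H}\otimes_{\mathbb{R}}\mathbb{D}$ ($\varepsilon$ central). Conjugation: $\overline{q_0+q_1\mathbf{i}+q_2\mathbf{j}+q_3\mathbf{k}}=q_0-q_1\mathbf{i}-q_2\mathbf{j}-q_3\mathbf{k}$; for polynomials $\overline{\sum m_it^i}=\sum\overline{m_i}t^i$, and $Q\overline{Q}$ is real-valued for $Q\in\mathbb{H}[t]$. $\mathbb{DH}[t]$ is the polynomial ring with $t$ commuting with all coefficients; $M=P+\varepsilon D$ with $P,D\in\mathbb{H}[t]$ is the decomposition into primal and dual part. $\operatorname{mrpf}(P)=1$ means $P$ has no factor $c\in\mathbb{R}[t]$ of positive degree. The trajectory of the point $x_0+\varepsilon x$ of projective 3-space under $M$ is $(P-\varepsilon D)(x_0+\varepsilon x)(\overline{P}+\varepsilon\overline{D})=x_0P\overline{P}+\varepsilon X$; its points at infinity correspond to zeros of $x_0P\overline{P}$, and the absolute circle is given by $x_0=0$, $\overline{X}X=0$. *)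

(* Defs.v *)
From HB Require Import structures.
From mathcomp Require Import all_boot all_order all_algebra.
Set Implicit Arguments. Unset Strict Implicit. Unset Printing Implicit Defensive.
Import Order.TTheory GRing.Theory Num.Theory.
Local Open Scope ring_scope.

(* With A = R we get H; with A = {poly R} we get
   H[t] = H (x)_R R[t] (t central), the coefficients of t^n being the
   quaternions formed by the n-th coefficients of the four components. *)
Record quat (A : Type) := Quat { q0 : A; q1 : A; q2 : A; q3 : A }.
Arguments Quat {A}.

Section QuatOps.
Variable A : comNzRingType.
Implicit Types a b : quat A.

Definition qadd a b := Quat (q0 a + q0 b) (q1 a + q1 b) (q2 a + q2 b) (q3 a + q3 b).
Definition qopp a := Quat (- q0 a) (- q1 a) (- q2 a) (- q3 a).
Definition qsub a b := qadd a (qopp b).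
(* Hamilton product: i^2 = j^2 = k^2 = ijk = -1 *)
Definition qmul a b := Quat
  (q0 a * q0 b - q1 a * q1 b - q2 a * q2 b - q3 a * q3 b)
  (q0 a * q1 b + q1 a * q0 b + q2 a * q3 b - q3 a * q2 b)
  (q0 a * q2 b - q1 a * q3 b + q2 a * q0 b + q3 a * q1 b)
  (q0 a * q3 b + q1 a * q2 b - q2 a * q1 b + q3 a * q0 b).
Definition qconj a := Quat (q0 a) (- q1 a) (- q2 a) (- q3 a).
Definition qscale (c : A) a := Quat (c * q0 a) (c * q1 a) (c * q2 a) (c * q3 a).
Definition qzero : quat A := Quat 0 0 0 0.
Definition qone : quat A := Quat 1 0 0 0.
End QuatOps.

Definition qmap (A B : Type) (f : A -> B) (a : quat A) :=
  Quat (f (q0 a)) (f (q1 a)) (f (q2 a)) (f (q3 a)).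

(* Dual numbers over quaternions: prim + eps * dual, eps^2 = 0, eps central. *)
Record dquat (A : Type) := DQ { prim : quat A; dual : quat A }.
Arguments DQ {A}.

Section DQuatOps.
Variable A : comNzRingType.
Definition dqmul (m n : dquat A) : dquat A :=
  DQ (qmul (prim m) (prim n))
     (qadd (qmul (prim m) (dual n)) (qmul (dual m) (prim n))).
Definition dqone : dquat A := DQ (qone A) (qzero A).
End DQuatOps.

Section Poly.
Variable R : rcfType.

Notation qpoly := (quat {poly R}).

Definition qpolyC (h : quat R) : qpoly := qmap (fun c => c%:P) h.

Definition lin_factor (h : dquat R) : dquat {poly R} :=
  DQ (qsub (Quat 'X 0 0 0) (qpolyC (prim h))) (qopp (qpolyC (dual h))).

Definition lin_prod (hs : seq (dquat R)) : dquat {poly R} :=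
  foldr (fun h acc => dqmul (lin_factor h) acc) (dqone _) hs.

(* M = P + eps D monic: the leading coefficient (in DH) is 1, i.e. P has
   leading coefficient 1 (real part monic, other parts of lower degree)
   and D has lower degree than P. *)
Definition dq_monic (M : dquat {poly R}) : Prop :=
  let P := prim M in let D := dual M in
  [/\ q0 P \is monic,
      [/\ (size (q1 P) < size (q0 P))%N, (size (q2 P) < size (q0 P))%N
        & (size (q3 P) < size (q0 P))%N]
    & [/\ (size (q0 D) < size (q0 P))%N, (size (q1 D) < size (q0 P))%N,
          (size (q2 D) < size (q0 P))%N & (size (q3 D) < size (q0 P))%N]].

(* mrpf(P) = 1 : P has no real polynomial factor of positive degree *)
Definition mrpf_one (P : qpoly) : Prop :=
  ~ exists c : {poly R}, (1 < size c)%N /\ exists Q : qpoly, P = qscale c Q.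

(* Q * conj Q is real; this is its (only possibly nonzero) real part *)
Definition qnormp (Q : qpoly) : {poly R} := q0 (qmul Q (qconj Q)).

Definition traj_X (P D : qpoly) (x0 x1 x2 x3 : R) : qpoly :=
  qadd (qmul (qmul P (qpolyC (Quat 0 x1 x2 x3))) (qconj P))
       (qscale (x0%:P) (qsub (qmul P (qconj D)) (qmul D (qconj P)))).
End Poly.

(* Main.v *)
Require Import Defs.
From HB Require Import structures.
From mathcomp Require Import all_boot all_order all_algebra.
From mathcomp Require Import ring zify.
Import Order.TTheory GRing.Theory Num.Theory.
Local Open Scope ring_scope.

Notation qn a := (q0 (qmul a (qconj a))).
Notation qS a d := (q0 (qadd (qmul a (qconj d)) (qmul d (qconj a)))).

Section Q.
Variable A : comNzRingType.
Implicit Types a b ad bd : quat A.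

Lemma qn_mul a b : qn (qmul a b) = qn a * qn b.
Proof. case: a => ????; case: b => ????; rewrite /=; ring. Qed.

Lemma qS_mul a ad b bd :
  qS (qmul a b) (qadd (qmul a bd) (qmul ad b)) = qS a ad * qn b + qn a * qS b bd.
Proof. case: a => ????; case: b => ????; case: ad => ????; case: bd => ????; rewrite /=; ring. Qed.

Lemma qS_one : qS (qone A) (qzero A) = 0.
Proof. rewrite /=; ring. Qed.

Lemma big_id (P D : quat A) (x0 x1 x2 x3 : A) :
  let x := Quat 0 x1 x2 x3 in
  let X := qadd (qmul (qmul P x) (qconj P)) (qscale x0 (qsub (qmul P (qconj D)) (qmul D (qconj P)))) in
  qn X = qn P * (qn P * (x1*x1+x2*x2+x3*x3) + 2 * x0 * (q0 (qmul (qmul x (qconj P)) D) - q0 (qmul (qmul P x) (qconj D))) + 4 * x0 * x0 * qn D) - x0 * x0 * (qS P D * qS P D).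
Proof. case: P => ????; case: D => ????; rewrite /=; ring. Qed.
End Q.

Section Poly2.
Variable R : rcfType.
Implicit Types N p q : {poly R}.

Lemma sum4sq_eq0 (a b c d : R) : a * a + b * b + c * c + d * d = 0 ->
  [/\ a = 0, b = 0, c = 0 & d = 0].
Proof.
move=> /eqP H.
have ha : 0 <= a * a by rewrite -expr2 sqr_ge0.
have hb : 0 <= b * b by rewrite -expr2 sqr_ge0.
have hc : 0 <= c * c by rewrite -expr2 sqr_ge0.
have hd : 0 <= d * d by rewrite -expr2 sqr_ge0.
move: H; rewrite paddr_eq0 ?addr_ge0 // => /andP[].
rewrite paddr_eq0 ?addr_ge0 // => /andP[].
rewrite paddr_eq0 ?addr_ge0 // => /andP[].
rewrite -!expr2 !sqrf_eq0 => /eqP-> /eqP-> /eqP-> /eqP->; by split.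
Qed.

Lemma irr_dich N q : irreducible_poly N -> N %| q \/ coprimep N q.
Proof.
move=> irr; have [h|h] := irredp_XsubCP irr (dvdp_gcdl N q).
  by right; rewrite coprimep_def size_poly_eq1.
by left; rewrite -(eqp_dvdl _ h) dvdp_gcdr.
Qed.

Lemma lin_norm (h : dquat R) : qn (prim (lin_factor h)) =
  ('X - (q0 (prim h))%:P)^+2 + (q1 (prim h) ^+2 + q2 (prim h) ^+2 + q3 (prim h) ^+2)%:P.
Proof.
case: h => [[a b c d] ?]; rewrite /lin_factor /qpolyC /qmap /= !polyCD !polyC_exp; ring.
Qed.

Lemma lin_norm_size (h : dquat R) : size (qn (prim (lin_factor h))) = 3%N.
Proof.
by rewrite lin_norm size_polyDl size_exp_XsubC // (leq_ltn_trans (size_polyC_leq1 _)).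
Qed.

Lemma no_lin (P : quat {poly R}) N : mrpf_one P -> N \is monic -> size N = 2%N ->
  ~~ (N %| qnormp P).
Proof.
move=> mr mon s2; apply/negP => dv.
pose r := - N`_0.
have N1 : N`_1 = 1 by move: (monicP mon); rewrite /lead_coef s2.
have Nr : N.[r] = 0.
  rewrite horner_coef s2 !big_ord_recl big_ord0 /= N1 /r; ring.
have G0 : (qnormp P).[r] = 0 by case/dvdpP: dv => q ->; rewrite hornerM Nr mulr0.
clear dv; case: P mr G0 => a b c d mr.
have -> : qnormp (Quat a b c d) = a*a+b*b+c*c+d*d by rewrite /qnormp /=; ring.
rewrite !hornerE => /sum4sq_eq0 [/eqP ha /eqP hb /eqP hc /eqP hd].
move: ha hb hc hd; rewrite -!/(root _ _) !root_factor_theorem.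
move=> /dvdpP [qa ea] /dvdpP [qb eb] /dvdpP [qc ec] /dvdpP [qd ed].
apply: mr; exists ('X - r%:P); split; first by rewrite size_XsubC.
by exists (Quat qa qb qc qd); rewrite /qscale /= ea eb ec ed !(mulrC ('X - r%:P)).
Qed.

Lemma inv_lemma N (irr : irreducible_poly N) (sN : (2 < size N)%N) (hs : seq (dquat R)) :
  forall e, N ^+ e.+1 %| qn (prim (lin_prod hs)) ->
            N ^+ e %| qS (prim (lin_prod hs)) (dual (lin_prod hs)).
Proof.
have N0 : N != 0 by exact: irredp_neq0.
elim: hs => [|h hs IH] e.
  move=> _; have -> : qS (prim (lin_prod (R:=R) [::])) (dual (lin_prod (R:=R) [::])) = 0.
    by rewrite /=; ring.
  exact: dvdp0.
have -> : prim (lin_prod (h :: hs)) = qmul (prim (lin_factor h)) (prim (lin_prod hs)) by [].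
have -> : dual (lin_prod (h :: hs)) = qadd (qmul (prim (lin_factor h)) (dual (lin_prod hs)))
   (qmul (dual (lin_factor h)) (prim (lin_prod hs))) by [].
rewrite qn_mul qS_mul.
set nh := qn _; set lh := qS _ _.
set G := qn _; set S := qS _ _.
have nh0 : nh != 0 by rewrite -size_poly_gt0 /nh lin_norm_size.
case: (irr_dich N nh irr) => [dv|cop] hdv.
- case/dvdpP: dv => w ew.
  have copw : coprimep N w.
    case: (irr_dich N w irr) => // /dvdpP [u eu].
    have : N * N %| nh by rewrite ew eu -mulrA dvdp_mull.
    move/(dvdp_leq nh0); rewrite /nh lin_norm_size size_mul //.
    rewrite -subn1 => H; exfalso; move: sN H; move: (size N) => s; lia.
  have hG : N ^+ e %| G.
    move: hdv; rewrite ew exprSr -mulrA [N * G]mulrC mulrA dvdp_mul2r //.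
    by rewrite Gauss_dvdpr // coprimep_expl.
  apply: dvdp_add; first exact: dvdp_mull.
  case: e hdv hG => [|e] hdv hG; first by rewrite expr0 dvd1p.
  rewrite ew exprSr mulrAC.
  by apply: dvdp_mul; [apply: dvdp_mull; apply: IH | exact: dvdpp].
- have hG1 : N ^+ e.+1 %| G by move: hdv; rewrite Gauss_dvdpr // coprimep_expl.
  apply: dvdp_add; apply: dvdp_mull; last exact: IH.
  by apply: dvdp_trans hG1; rewrite dvdp_exp2l.
Qed.

End Poly2.

Theorem theorem2 (R : rcfType) (M : dquat {poly R}) (hs : seq (dquat R))
  (m : nat) (N : 'I_m -> {poly R}) (n : 'I_m -> nat) :
  dq_monic M ->
  mrpf_one (prim M) ->
  M = lin_prod hs ->
  (forall i, N i \is monic) ->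
  (forall i, irreducible_poly (N i)) ->
  (forall i j, i != j -> coprimep (N i) (N j)) ->
  qnormp (prim M) = \prod_(i < m) N i ^+ n i ->
  forall (x0 x1 x2 x3 : R) (i : 'I_m), (1 < n i)%N ->
    N i ^+ n i %| qnormp (traj_X (prim M) (dual M) x0 x1 x2 x3).
Proof.
move=> _ mr hM Nmon Nirr _ hprod x0 x1 x2 x3 i n1.
have hG : N i ^+ n i %| qnormp (prim M).
  by rewrite hprod (bigD1 i) //= dvdp_mulr // dvdpp.
have sN : (2 < size (N i))%N.
  have s1 := (Nirr i).1.
  rewrite ltn_neqAle s1 andbT; apply/eqP => /esym s2.
  case/negP: (@no_lin R _ _ mr (Nmon i) s2).
  apply: dvdp_trans hG; apply: dvdp_exp; [exact: ltnW | exact: dvdpp].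
have hS : N i ^+ (n i).-1 %| qS (prim M) (dual M).
  rewrite hM; apply: inv_lemma => //; rewrite prednK ?(ltnW n1) // -hM; exact: hG.
rewrite /traj_X.
have -> : Defs.qpolyC (R:=R) (Quat 0 x1 x2 x3) = Quat (0 : {poly R}) x1%:P x2%:P x3%:P by rewrite /Defs.qpolyC /qmap /= polyC0.
rewrite /qnormp big_id.
apply: dvdp_sub; first exact: dvdp_mulr.
apply: dvdp_mull; apply: dvdp_trans (dvdp_mul hS hS).
rewrite -exprD dvdp_exp2l //.
rewrite -!subn1; move: n1; move: (n i) => k; lia.
Qed.
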